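(* Let $G=(V,E)$ be a hypergraph, $k\ge2$ an integer, and $(Y_1,\dots,Y_p,W,Z)$ a partition of $V$ for some integer $p\ge 2k-2$. Then there exist distinct $i_1,\dots,i_{k-1}\in[p]$ such that \[2\,\mathrm{cost}\Bigl(Y_{i_1},\dots,Y_{i_{k-1}},V\setminus\textstyle\bigcup_{j=1}^{k-1}Y_{i_j}\Bigr)\le\mathrm{cost}(Y_1,\dots,Y_p,W,Z)+\alpha(Y_1,\dots,Y_p,W,Z)+\beta(Y_1,\dots,Y_p,Z).\]
   Context: A hypergraph $G=(V,E)$ has finite vertex set $V$ and finite multiset $E$ of hyperedges (subsets of $V$). For a partition of $V$ into non-empty parts, $\mathrm{cost}$ of the partition is the number of hyperedges meeting at least two parts. For a partition $(Y_1,\dots,Y_p,W,Z)$ of $V$: $\alpha(Y_1,\dots,Y_p,W,Z)$ is the number of hyperedges meeting $Z$ and meeting at least two of the sets $Y_1,\dots,Y_p,W$; $\beta(Y_1,\dots,Y_p,Z)$ is the number of hyperedges disjoint from $Z$ meeting at least two of $Y_1,\dots,Y_p$. *)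

(* Defs.v *)
From mathcomp Require Import all_boot.
Set Implicit Arguments. Unset Strict Implicit. Unset Printing Implicit Defensive.

(* A hypergraph on a finite vertex type V: a finite multiset (seq) of hyperedges. *)
Definition hypergraph (V : finType) := seq {set V}.

Section Hyp.
Variable V : finType.

Definition nmeet (e : {set V}) (P : seq {set V}) : nat :=
  count (fun X => e :&: X != set0) P.

Definition is_partition (P : seq {set V}) : Prop :=
  [/\ all (fun X => X != set0) P,
      (forall i j, i < j < size P -> [disjoint nth set0 P i & nth set0 P j])
    & \bigcup_(X <- P) X = [set: V]].

Definition cost (E : hypergraph V) (P : seq {set V}) : nat :=
  count (fun e => 1 < nmeet e P) E.

Definition alpha (E : hypergraph V) (Ys : seq {set V}) (W Z : {set V}) : nat :=
  count (fun e => (e :&: Z != set0) && (1 < nmeet e (rcons Ys W))) E.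

Definition beta (E : hypergraph V) (Ys : seq {set V}) (Z : {set V}) : nat :=
  count (fun e : {set V} => [disjoint e & Z] && (1 < nmeet e Ys)) E.

End Hyp.

(* Main.v *)
Require Import Defs.
From mathcomp Require Import all_boot zify.

Lemma countE (T : Type) (a : pred T) s : count a s = \sum_(x <- s) (a x : nat).
Proof. by elim: s => [|x s IH]; rewrite ?big_nil ?big_cons //= IH. Qed.

Lemma select p (c : 'I_p -> nat) m (A : {set 'I_p}) : 2 * m <= #|A| ->
  exists S : {set 'I_p}, [/\ S \subset A, #|S| = m &
     2 * \sum_(i in S) c i <= \sum_(i in A) c i].
Proof.
elim: m A => [|m IH] A hA.
  by exists set0; rewrite sub0set cards0 big_set0.
have [x xA] : exists x, x \in A.
  by apply/set0Pn; rewrite -card_gt0; lia.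
case: (arg_minnP c xA) => i0 i0A' i0min.
have i0A : i0 \in A := i0A'.
have [i1 i1A] : exists i1, i1 \in A :\ i0.
  apply/set0Pn; rewrite -card_gt0; move: hA; rewrite (cardsD1 i0 A) i0A /=; case: #|_| => //; lia.
have hA' : 2 * m <= #|A :\ i0 :\ i1|.
  move: hA; rewrite (cardsD1 i0 A) (cardsD1 i1 (A :\ i0)) i0A i1A /=; lia.
have [S' [sS' cS' hS']] := IH _ hA'.
have i0S' : i0 \notin S'.
  apply/negP => /(subsetP sS'); rewrite !inE eqxx; lia.
exists (i0 |: S'); split.
- rewrite subUset sub1set i0A /=; apply: subset_trans sS' _.
  by apply/subsetP => y; rewrite !inE => /and3P[].
- by rewrite cardsU1 i0S' cS'.
- rewrite big_setU1 //= (big_setD1 i0 i0A) (big_setD1 i1 i1A) /=.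
  have := i0min i1; move: (i1A); rewrite !inE => /andP[_ h] /(_ h).
  move=> h0; rewrite mulnDr mul2n -addnn -addnA leq_add2l; exact: leq_add.
Qed.

Lemma edge_arith (a aS : nat) (bW bZ m : bool) : aS <= a -> (m -> [|| bW, bZ | aS < a]) ->
 let w := (1 < a + bW + bZ) + (bZ && (1 < a + bW)) + (~~ bZ && (1 < a)) in
 2 * (1 < aS + m) + (w == 1) <= w + 2 * ((w == 1) * aS).
Proof. by case: bW bZ m => [] [] [] /=; lia. Qed.

Lemma w1_arith (a : nat) (bW bZ : bool) :
 let w := (1 < a + bW + bZ) + (bZ && (1 < a + bW)) + (~~ bZ && (1 < a)) in
 (w == 1) * a <= (w == 1).
Proof. by case: bW bZ => [] [] /=; lia. Qed.

Lemma main (V : finType) (E : hypergraph V) (m p : nat)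
  (Y : 'I_p -> {set V}) (W Z : {set V}) :
  2 * m <= p ->
  is_partition ([seq Y i | i <- enum 'I_p] ++ [:: W; Z]) ->
  exists f : 'I_m -> 'I_p, injective f /\
    2 * cost E ([seq Y (f j) | j <- enum 'I_m]
                 ++ [:: ~: \bigcup_(j < m) Y (f j)])
    <= cost E ([seq Y i | i <- enum 'I_p] ++ [:: W; Z])
       + alpha E [seq Y i | i <- enum 'I_p] W Z
       + beta E [seq Y i | i <- enum 'I_p] Z.
Proof.
move=> hm [_ _ hcov].
pose g e i := e :&: Y i != set0.
pose a e := \sum_(i < p) (g e i : nat).
pose bW e := e :&: W != set0.
pose bZ e := e :&: Z != set0.
pose w e := (1 < a e + bW e + bZ e) + (bZ e && (1 < a e + bW e)) + (~~ bZ e && (1 < a e)).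
pose c i := \sum_(e <- E) ((w e == 1) * g e i).
have cnt e : count (fun X => e :&: X != set0) [seq Y i | i <- enum 'I_p] = a e.
  by rewrite count_map countE big_enum.
have hrhs : cost E ([seq Y i | i <- enum 'I_p] ++ [:: W; Z])
       + alpha E [seq Y i | i <- enum 'I_p] W Z
       + beta E [seq Y i | i <- enum 'I_p] Z = \sum_(e <- E) w e.
  rewrite /cost /alpha /beta !countE -!big_split /=; apply: eq_bigr => e _.
  rewrite /nmeet count_cat -cats1 count_cat cnt /= -setI_eq0 !addn0 !addnA.
  by rewrite /w /bZ /bW negbK.
rewrite hrhs.
have [S [_ cS hS]] : exists S : {set 'I_p}, [/\ S \subset setT, #|S| = m &
     2 * \sum_(i in S) c i <= \sum_(i in setT) c i].
  by apply: select; rewrite cardsT card_ord.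
subst m; exists enum_val; split; first exact: enum_val_inj.
pose aS e := \sum_(i in S) (g e i : nat).
have hU : \bigcup_(j < #|S|) Y (enum_val j) = \bigcup_(i in S) Y i.
  by rewrite (big_enum_val (A := mem S)).
rewrite hU.
have hnew : cost E ([seq Y (enum_val j) | j <- enum 'I_#|S|] ++ [:: ~: \bigcup_(i in S) Y i])
   = \sum_(e <- E) (1 < aS e + (e :&: ~: (\bigcup_(i in S) Y i) != set0)).
  rewrite /cost countE; apply: eq_bigr => e _.
  rewrite /nmeet count_cat count_map countE big_enum /= addn0.
  congr (1 < _ + _); by rewrite /aS (big_enum_val (A := mem S)).
rewrite hnew.
have he e : 2 * (1 < aS e + (e :&: ~: (\bigcup_(i in S) Y i) != set0)) + (w e == 1)
    <= w e + 2 * ((w e == 1) * aS e).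
  apply: edge_arith.
    by rewrite /aS /a [X in _ <= X](bigID (mem S)) /= leq_addr.
  case/set0Pn => x; rewrite !inE => /andP[xe xU].
  have : x \in [set: V] by rewrite inE.
  rewrite -hcov big_cat /= big_map big_enum !big_cons big_nil !inE /=.
  case/orP => [/bigcupP[i _ xi]|].
    have iS : i \notin S.
      apply/negP => iS; move/negP: xU; apply; apply/bigcupP; by exists i.
    apply/orP; right; apply/orP; right.
    rewrite /aS /a [X in _ < X](bigID (mem S)) /= -[X in X < _]addn0 ltn_add2l.
    rewrite (bigD1 i) //= /g; suff -> : e :&: Y i != set0 by [].
    by apply/set0Pn; exists x; rewrite inE xe xi.
  case/orP => [xW|/orP[xZ|//]].
    by rewrite /bW; apply/orP; left; apply/set0Pn; exists x; rewrite inE xe xW.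
  by rewrite /bZ; apply/orP; right; apply/orP; left; apply/set0Pn; exists x; rewrite inE xe xZ.
have H1 : 2 * \sum_(e <- E) (1 < aS e + (e :&: ~: (\bigcup_(i in S) Y i) != set0)) + \sum_(e <- E) (w e == 1 : nat) <= \sum_(e <- E) w e + 2 * \sum_(e <- E) ((w e == 1) * aS e).
  rewrite !big_distrr -!big_split /=; apply: leq_sum => e _; exact: he.
have H2 : \sum_(e <- E) (w e == 1) * aS e = \sum_(i in S) c i.
  rewrite /c exchange_big /=; apply: eq_bigr => e _; by rewrite /aS big_distrr.
have H3 : \sum_(i in setT) c i <= \sum_(e <- E) (w e == 1 : nat).
  rewrite /c exchange_big /=; apply: leq_sum => e _.
  rewrite -big_distrr /=.
  have -> : \sum_(i in setT) (g e i : nat) = a e by rewrite /a; apply: eq_bigl => i; rewrite inE.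
  exact: w1_arith.
rewrite H2 in H1.
move: H1 H3 hS.
move=> h1 h3 hs'.
rewrite -(leq_add2r (\sum_(e <- E) (w e == 1 : nat))); apply: leq_trans h1 _.
rewrite leq_add2l; exact: leq_trans hs' h3.
Qed.

Theorem lemma3p5 (V : finType) (E : hypergraph V) (k p : nat)
  (Y : 'I_p -> {set V}) (W Z : {set V}) :
  2 <= k -> 2 * k - 2 <= p ->
  is_partition ([seq Y i | i <- enum 'I_p] ++ [:: W; Z]) ->
  exists f : 'I_(k.-1) -> 'I_p, injective f /\
    2 * cost E ([seq Y (f j) | j <- enum 'I_(k.-1)]
                 ++ [:: ~: \bigcup_(j < k.-1) Y (f j)])
    <= cost E ([seq Y i | i <- enum 'I_p] ++ [:: W; Z])
       + alpha E [seq Y i | i <- enum 'I_p] W Z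
       + beta E [seq Y i | i <- enum 'I_p] Z.
Proof.
move=> hk hp; apply: main; lia.
Qed.
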